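(* Let $\mathcal{L}$ be a finite set of localities and $\mathcal{G}$ a connected, undirected simple graph on $\mathcal{L}$. Let $\beta,\beta^{\textsc{int}}:\mathbb{Z}_{\ge 0}\to(0,\infty)$ be bounded functions with $\lim_{n\to\infty}\beta(n)=0$ and $\lim_{n\to\infty}\beta^{\textsc{int}}(n)=0$, and let $\delta>0$. Consider the continuous-time Markov chain $\mathbf{X}(t)=(X_u(t))_{u\in\mathcal{L}}$ on $\mathbb{Z}_{\ge0}^{\mathcal{L}}$ in which, with $X(t)=\sum_u X_u(t)$, for each $u$: $X_u\to X_u+1$ at rate $\sum_{v:(u,v)\in\mathcal{G}}\beta(X(t))X_v(t)+\beta^{\textsc{int}}(X(t))X_u(t)$ and $X_u\to X_u-1$ at rate $\delta X_u(t)$. For each $n\ge1$ let $\mathbf{X}^{(n)}$ be any state with $\mathbf{1}^\top\mathbf{X}^{(n)}=n$ and let $T_n$ be the hitting time of the all-zero state starting from $\mathbf{X}^{(n)}$. Then $$\lim_{n\to\infty}\frac{\delta\,\mathbb{E}[T_n]}{\ln n}=1.$$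
   Context: $\mathbf{1}$ is the all-ones vector; $\mathbf{1}^\top\mathbf{X}$ is the total number of infections. *)

(* Defs.v *)
From HB Require Import structures.
From mathcomp Require Import all_boot all_order all_algebra.
From mathcomp Require Import all_classical all_reals all_analysis.
Set Implicit Arguments. Unset Strict Implicit. Unset Printing Implicit Defensive.
Import Order.TTheory GRing.Theory Num.Theory.
Local Open Scope ring_scope.

Section Epidemic.
Variables (R : realType) (L : finType) (G : rel L).
Variables (beta betai : nat -> R) (delta : R).

Definition state := {ffun L -> nat}.

Definition ntotal (x : state) : nat := (\sum_(u : L) x u)%N.

Definition up_rate (x : state) (u : L) : R :=
  beta (ntotal x) * (\sum_(v : L | G u v) (x v)%:R) + betai (ntotal x) * (x u)%:R.

Definition down_rate (x : state) (u : L) : R := delta * (x u)%:R.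

Definition out_rate (x : state) : R := \sum_(u : L) (up_rate x u + down_rate x u).

Definition incr (x : state) (u : L) : state :=
  [ffun v => if v == u then (x v).+1 else x v].
Definition decr (x : state) (u : L) : state :=
  [ffun v => if v == u then (x v).-1 else x v].

(* hold_mass k x = E_x[ (mean holding time at Y_k) ; Y_0,...,Y_k all nonzero ],
   where Y is the embedded jump chain started at x. *)
Fixpoint hold_mass (k : nat) (x : state) : R :=
  if ntotal x == 0%N then 0 else
  match k with
  | 0 => (out_rate x)^-1
  | k'.+1 => \sum_(u : L)
       (up_rate x u / out_rate x * hold_mass k' (incr x u)
        + down_rate x u / out_rate x * hold_mass k' (decr x u))
  end.

(* expected hitting time of the all-zero state, started from x:
   E_x[T] = E_x[ sum of holding times before hitting 0 ] *)
Definition exp_hit (x : state) : \bar R :=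
  (\sum_(0 <= k <oo) (hold_mass k x)%:E)%E.

End Epidemic.

(* Main.v *)
Require Import Defs.
From HB Require Import structures.
From mathcomp Require Import all_boot all_order all_algebra.
From mathcomp Require Import all_classical all_reals all_analysis.
From mathcomp Require Import ring lra zify.
Import Order.TTheory GRing.Theory Num.Theory numFieldNormedType.Exports.
Local Open Scope classical_set_scope.
Local Open Scope ring_scope.


Lemma ntotal_incr (L : finType) (x : state L) u :
  ntotal (incr x u) = (ntotal x).+1.
Proof.
rewrite /ntotal (bigD1 u) //= [in RHS](bigD1 u) //= ffunE eqxx addSn; congr (_.+1 + _).
by apply: eq_bigr => v /negbTE vu; rewrite ffunE vu.
Qed.

Lemma ntotal_decr (L : finType) (x : state L) u : (0 < x u)%N ->
  ntotal (decr x u) = (ntotal x).-1.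
Proof.
move=> xu.
rewrite /ntotal (bigD1 u) //= [in RHS](bigD1 u) //= ffunE eqxx.
have -> : (\sum_(i | i != u) decr x u i = \sum_(i | i != u) x i)%N.
  by apply: eq_bigr => v /negbTE vu; rewrite ffunE vu.
by case: (x u) xu.
Qed.

Lemma ntotal0 (L : finType) (x : state L) u : ntotal x = 0%N -> x u = 0%N.
Proof.
rewrite /ntotal (bigD1 u) //=; by case: (x u).
Qed.

Set Implicit Arguments. Unset Strict Implicit.

Definition Hs (R : realType) (L : finType) (G : rel L) (beta betai : nat -> R)
  (delta : R) (K : nat) (x : state L) : R :=
  \sum_(k < K) hold_mass G beta betai delta k x.

Lemma hm0 (R : realType) (L : finType) (G : rel L) (beta betai : nat -> R)
  (delta : R) k x : ntotal x = 0%N -> hold_mass G beta betai delta k x = 0.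
Proof. by case: k => [|k] /= ->. Qed.

Lemma Hs0 (R : realType) (L : finType) (G : rel L) (beta betai : nat -> R)
  (delta : R) K x : ntotal x = 0%N -> Hs G beta betai delta K x = 0.
Proof. by move=> h; rewrite /Hs big1 // => k _; rewrite hm0. Qed.

Lemma HsS (R : realType) (L : finType) (G : rel L) (beta betai : nat -> R)
  (delta : R) K x : ntotal x != 0%N ->
  Hs G beta betai delta K.+1 x = (out_rate G beta betai delta x)^-1 +
   \sum_(u : L) (up_rate G beta betai x u / out_rate G beta betai delta x
                   * Hs G beta betai delta K (incr x u)
               + down_rate delta x u / out_rate G beta betai delta x
                   * Hs G beta betai delta K (decr x u)).
Proof.
move=> h; rewrite /Hs big_ord_recl /= (negbTE h); congr (_ + _).
rewrite exchange_big /=; apply: eq_bigr => u _.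
by rewrite big_split /= -!mulr_sumr.
Qed.

Lemma sum_down (R : realType) (L : finType) (delta : R) (x : state L) :
  \sum_(u : L) down_rate delta x u = delta * (ntotal x)%:R.
Proof. by rewrite /down_rate -mulr_sumr /ntotal natr_sum. Qed.

Lemma out_rateE (R : realType) (L : finType) (G : rel L) (beta betai : nat -> R)
  (delta : R) x : out_rate G beta betai delta x =
  \sum_(u : L) up_rate G beta betai x u + delta * (ntotal x)%:R.
Proof. by rewrite /out_rate big_split /= sum_down. Qed.

Lemma up_ge0 (R : realType) (L : finType) (G : rel L) (beta betai : nat -> R)
  x u : (forall n, 0 < beta n) -> (forall n, 0 < betai n) ->
  0 <= up_rate G beta betai x u.
Proof.
move=> hb hbi; rewrite /up_rate addr_ge0 // mulr_ge0 //; first exact: ltW.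
- by rewrite sumr_ge0.
- exact: ltW.
Qed.

Lemma sumU_le (R : realType) (L : finType) (G : rel L) (beta betai : nat -> R)
  x : (forall n, 0 < beta n) -> (forall n, 0 < betai n) ->
  \sum_(u : L) up_rate G beta betai x u <=
  (beta (ntotal x) * #|L|%:R + betai (ntotal x)) * (ntotal x)%:R.
Proof.
move=> hb hbi; rewrite /up_rate big_split /= -mulr_sumr -mulr_sumr mulrDl.
rewrite -natr_sum -/(ntotal x) lerD2r -mulrA ler_wpM2l //; first exact: ltW.
apply: (@le_trans _ _ (\sum_(u : L) (ntotal x)%:R)).
  apply: ler_sum => u _; rewrite /ntotal natr_sum.
  rewrite [leRHS](bigID (fun v => G u v)) /= lerDl sumr_ge0 //.
by rewrite sumr_const mulr_natl.
Qed.

Lemma sum_split_rates (R : realType) (L : finType) (G : rel L) (beta betai : nat -> R)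
  (delta : R) x (A B : R) :
  \sum_(u : L) (up_rate G beta betai x u / out_rate G beta betai delta x * A
               + down_rate delta x u / out_rate G beta betai delta x * B)
  = (\sum_(u : L) up_rate G beta betai x u) / out_rate G beta betai delta x * A
    + delta * (ntotal x)%:R / out_rate G beta betai delta x * B.
Proof.
by rewrite big_split /= -sum_down !mulr_suml.
Qed.

Lemma Hs_upper (R : realType) (L : finType) (G : rel L) (beta betai : nat -> R)
  (delta : R) (f : nat -> R) :
  (forall n, 0 < beta n) -> (forall n, 0 < betai n) -> 0 < delta ->
  (forall n, 0 <= f n) -> (forall n, f n <= f n.+1) ->
  (forall n, (0 < n)%N -> 1 + (beta n * #|L|%:R + betai n) * n%:R * (f n.+1 - f n)
       <= delta * n%:R * (f n - f n.-1)) ->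
  forall K x, Hs G beta betai delta K x <= f (ntotal x).
Proof.
move=> hb hbi hd hf0 hfm hst; elim=> [|K IH] x.
  by rewrite /Hs big_ord0.
have [n0|nn0] := eqVneq (ntotal x) 0%N; first by rewrite Hs0.
rewrite HsS //.
set q := out_rate G beta betai delta x.
set U := \sum_(u : L) up_rate G beta betai x u.
set n := ntotal x.
have hq : q = U + delta * n%:R by rewrite /q out_rateE.
have hU0 : 0 <= U by apply: sumr_ge0 => u _; exact: up_ge0.
have hU : U <= (beta n * #|L|%:R + betai n) * n%:R by exact: sumU_le.
have hn : (1 <= n%:R :> R) by rewrite ler1n lt0n.
have hdn : 0 < delta * n%:R by rewrite mulr_gt0 // (lt_le_trans ltr01 hn).
have qpos : 0 < q by rewrite hq; lra.
apply: (@le_trans _ _ (q^-1 + (U / q * f n.+1 + delta * n%:R / q * f n.-1))).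
  rewrite lerD2l -sum_split_rates; apply: ler_sum => u _.
  apply: lerD.
    apply: ler_wpM2l; first by apply: divr_ge0 => //; [exact: up_ge0 | exact: ltW].
    by rewrite /n -(@ntotal_incr _ x u); apply: IH.
  have [xu0|xupos] := eqVneq (x u) 0%N.
    by rewrite /down_rate xu0 mulr0 !mul0r.
  apply: ler_wpM2l.
    apply: divr_ge0 => //; last exact: ltW.
    by rewrite /down_rate mulr_ge0 // ltW.
  by rewrite /n -(@ntotal_decr _ x u) ?lt0n //; apply: IH.
have hs : _ := hst n ltac:(by rewrite lt0n).
have qn0 : q != 0 by rewrite gt_eqF.
have -> : q^-1 + (U / q * f n.+1 + delta * n%:R / q * f n.-1) =
   (1 + U * f n.+1 + delta * n%:R * f n.-1) / q by field.
rewrite ler_pdivrMr // hq.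
have h1 : 0 <= ((beta n * #|L|%:R + betai n) * n%:R - U) * (f n.+1 - f n).
  by apply: mulr_ge0; rewrite subr_ge0 //; exact: hfm.
set c := (beta n * #|L|%:R + betai n) * n%:R in hs h1 *.
set D := delta * n%:R in hs hdn *.
nra.
Qed.

Lemma psum_mono (R : realType) (m : nat -> R) a b : (forall k, 0 <= m k) ->
  (a <= b)%N -> \sum_(k < a) m k <= \sum_(k < b) m k.
Proof.
move=> m0 ab; rewrite -!(big_mkord xpredT) (big_cat_nat (leq0n a) ab) /=.
by rewrite lerDl sumr_ge0.
Qed.

Lemma Hs_lower (R : realType) (L : finType) (G : rel L) (beta betai : nat -> R)
  (delta : R) (m : nat -> R) :
  (forall n, 0 < beta n) -> (forall n, 0 < betai n) -> 0 < delta ->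
  (forall n, 0 <= m n) ->
  (forall j n, (0 < j)%N -> (j <= n)%N ->
      m j * ((beta n * #|L|%:R + betai n + delta) * n%:R) <= 1) ->
  forall K x, \sum_(k < minn (ntotal x) K) m k.+1 <= Hs G beta betai delta K x.
Proof.
move=> hb hbi hd hm0 hmj; elim=> [|K IH] x.
  by rewrite minn0 big_ord0 /Hs big_ord0.
have [n0|nn0] := eqVneq (ntotal x) 0%N.
  by rewrite n0 min0n big_ord0 Hs0.
rewrite HsS //.
set q := out_rate G beta betai delta x.
set U := \sum_(u : L) up_rate G beta betai x u.
set n := ntotal x.
have hq : q = U + delta * n%:R by rewrite /q out_rateE.
have hU0 : 0 <= U by apply: sumr_ge0 => u _; exact: up_ge0.
have hU : U <= (beta n * #|L|%:R + betai n) * n%:R by exact: sumU_le.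
have hn : (1 <= n%:R :> R) by rewrite ler1n lt0n.
have hdn : 0 < delta * n%:R by rewrite mulr_gt0 // (lt_le_trans ltr01 hn).
have qpos : 0 < q by rewrite hq; lra.
have npos : (0 < n)%N by rewrite lt0n.
have hj : minn n K.+1 = (minn n.-1 K).+1.
  by case: (n) npos => // n' _; rewrite /= minnSS.
set j := minn n.-1 K.
rewrite hj big_ord_recr /=.
have hG : forall y : nat, (j <= y)%N -> \sum_(k < j) m k.+1 <= \sum_(k < y) m k.+1.
  by move=> y hy; apply: (@psum_mono R (fun k => m k.+1)).

apply: (@le_trans _ _ (q^-1 + (U / q * \sum_(k < j) m k.+1
                                + delta * n%:R / q * \sum_(k < j) m k.+1))).
  have -> : U / q * \sum_(k < j) m k.+1 + delta * n%:R / q * \sum_(k < j) m k.+1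
     = \sum_(k < j) m k.+1.
    by rewrite -mulrDl -mulrDl -hq divff ?mul1r // gt_eqF.

  rewrite [leRHS]addrC -/j lerD2l.
  have hjn : (j.+1 <= n)%N by rewrite -hj geq_minl.
  have := hmj j.+1 n (ltn0Sn _) hjn.
  set c := beta n * #|L|%:R + betai n.
  move=> hmjn.
  rewrite -[q^-1]mul1r ler_pdivlMr // hq.
  have := hm0 j.+1; set a := m j.+1 => ha.
  have : a * U <= a * (c * n%:R) by rewrite ler_wpM2l.

  move=> h; have e : a * ((c + delta) * n%:R) = a * (c * n%:R) + a * (delta * n%:R) by ring.
  rewrite e in hmjn; rewrite mulrDr; lra.
rewrite lerD2l -sum_split_rates; apply: ler_sum => u _.
apply: lerD.
  apply: ler_wpM2l; first by apply: divr_ge0 => //; [exact: up_ge0 | exact: ltW].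
  apply: le_trans (IH _); apply: hG.
  rewrite (@ntotal_incr _ x u) /j -/n; lia.
have [xu0|xupos] := eqVneq (x u) 0%N.
  by rewrite /down_rate xu0 mulr0 !mul0r.
apply: ler_wpM2l.
  apply: divr_ge0 => //; last exact: ltW.
  by rewrite /down_rate mulr_ge0 // ltW.
apply: le_trans (IH _); apply: hG.
by rewrite (@ntotal_decr _ x u) ?lt0n.
Qed.

Lemma ln_sub_le (R : realType) (a b : R) : 0 < a -> 0 < b -> ln a - ln b <= a / b - 1.
Proof.
move=> ha hb.
have hab : 0 < a / b by rewrite divr_gt0.
have := @le_ln1Dx R (a / b - 1) ltac:(lra).
rewrite addrC subrK lnM ?lnV ?posrE ?invr_gt0 //.
Qed.

Lemma harm_lower (R : realType) (N : nat) : (0 < N)%N -> forall n, (N <= n.+1)%N ->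
  ln (n.+1)%:R - ln N%:R <=
  \sum_(k < n) (if (N <= k.+1)%N then ((k.+1)%:R : R)^-1 else 0).
Proof.
move=> N0; elim=> [|n IH] hN.
  have -> : N = 1%N by lia.
  by rewrite big_ord0 subrr.
rewrite big_ord_recr /=.
have [e|ne] := eqVneq N n.+2.
  rewrite e subrr; apply: addr_ge0; first by apply: sumr_ge0 => k _; case: ifP.
  by rewrite ltnn.
have hN' : (N <= n.+1)%N by lia.
rewrite hN'.
have := IH hN'.
have := @ln_sub_le R (n.+2)%:R (n.+1)%:R (ltr0Sn _ _) (ltr0Sn _ _).
have -> : (n.+2)%:R / (n.+1)%:R - 1 = ((n.+1)%:R : R)^-1.
  rewrite -[(n.+2)%:R]natr1 mulrDl divff ?pnatr_eq0 // mul1r; ring.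
move=> h1 h2; set S := \sum_(k < n) _ in h2 *.
set t := (n.+1%:R)^-1 in h1 *; set l1 := ln _ in h1 *; set l2 := ln _ in h1 h2 *; set l3 := ln _ in h2 *.
lra.
Qed.

Lemma harm_upper (R : realType) n : (0 < n)%N ->
  \sum_(k < n) ((k.+1)%:R : R)^-1 <= 1 + ln n%:R.
Proof.
elim: n => [//|n IH] _.
rewrite big_ord_recr /=.
have [->|n0] := eqVneq n 0%N.
  by rewrite big_ord0 ln1 invr1 add0r addr0.
have := IH ltac:(lia).
have := @ln_sub_le R n%:R (n.+1)%:R ltac:(rewrite ltr0n; lia) (ltr0Sn _ _).
have -> : n%:R / (n.+1)%:R - 1 = - ((n.+1)%:R : R)^-1.
  rewrite -{1}[n%:R](@addrK _ 1) -natr1 mulrBl divff ?pnatr_eq0 // mul1r; ring.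
move=> h1 h2.
set t := (n.+1%:R)^-1 in h1 *; set l1 := ln _ in h1 h2; set l2 := ln _ in h1 *.
set S := \sum_(k < n) _ in h2 *.
lra.
Qed.

Lemma hm_ge0 (R : realType) (L : finType) (G : rel L) (beta betai : nat -> R)
  (delta : R) :
  (forall n, 0 < beta n) -> (forall n, 0 < betai n) -> 0 < delta ->
  forall k x, 0 <= hold_mass G beta betai delta k x.
Proof.
move=> hb hbi hd; elim=> [|k IH] x /=; case: ifP => // _.
  rewrite invr_ge0 /out_rate sumr_ge0 // => u _.
  by rewrite addr_ge0 ?up_ge0 // /down_rate mulr_ge0 // ltW.
have q0 : 0 <= out_rate G beta betai delta x.
  rewrite /out_rate sumr_ge0 // => u _.
  by rewrite addr_ge0 ?up_ge0 // /down_rate mulr_ge0 // ltW.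
rewrite sumr_ge0 // => u _; rewrite addr_ge0 // mulr_ge0 // divr_ge0 //.
  exact: up_ge0.
by rewrite /down_rate mulr_ge0 // ltW.
Qed.

Lemma psumE (R : realType) (L : finType) (G : rel L) (beta betai : nat -> R)
  (delta : R) x K :
  (\sum_(0 <= k < K) (hold_mass G beta betai delta k x)%:E)%E
   = (Hs G beta betai delta K x)%:E.
Proof. by rewrite sumEFin big_mkord. Qed.

Lemma exp_hit_le (R : realType) (L : finType) (G : rel L) (beta betai : nat -> R)
  (delta : R) x (B : R) :
  (forall n, 0 < beta n) -> (forall n, 0 < betai n) -> 0 < delta ->
  (forall K, Hs G beta betai delta K x <= B) ->
  (exp_hit G beta betai delta x <= B%:E)%E.
Proof.
move=> hb hbi hd hB; rewrite /exp_hit.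
apply: lime_le.
  apply: is_cvg_nneseries => n _ _; rewrite lee_fin; exact: hm_ge0.
by apply: nearW => K; rewrite psumE lee_fin.
Qed.

Lemma exp_hit_ge (R : realType) (L : finType) (G : rel L) (beta betai : nat -> R)
  (delta : R) x K :
  (forall n, 0 < beta n) -> (forall n, 0 < betai n) -> 0 < delta ->
  ((Hs G beta betai delta K x)%:E <= exp_hit G beta betai delta x)%E.
Proof.
move=> hb hbi hd; rewrite -psumE /exp_hit.
apply: nneseries_lim_ge => n _ _; rewrite lee_fin; exact: hm_ge0.
Qed.

Fixpoint Pk (R : realType) (L : finType) (G : rel L) (beta betai : nat -> R)
  (delta : R) (k : nat) (x : state L) : R :=
  if ntotal x == 0%N then 0 else
  match k with
  | 0 => 1
  | k'.+1 => \sum_(u : L)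
       (up_rate G beta betai x u / out_rate G beta betai delta x * Pk G beta betai delta k' (incr x u)
        + down_rate delta x u / out_rate G beta betai delta x * Pk G beta betai delta k' (decr x u))
  end.

Definition Cs (R : realType) (L : finType) (G : rel L) (beta betai : nat -> R)
  (delta : R) (K : nat) (x : state L) : R :=
  \sum_(k < K) Pk G beta betai delta k x.

Lemma Pk0 (R : realType) (L : finType) (G : rel L) (beta betai : nat -> R)
  (delta : R) k x : ntotal x = 0%N -> Pk G beta betai delta k x = 0.
Proof. by case: k => [|k] /= ->. Qed.

Lemma Cs0 (R : realType) (L : finType) (G : rel L) (beta betai : nat -> R)
  (delta : R) K x : ntotal x = 0%N -> Cs G beta betai delta K x = 0.
Proof. by move=> h; rewrite /Cs big1 // => k _; rewrite Pk0. Qed.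

Lemma CsS (R : realType) (L : finType) (G : rel L) (beta betai : nat -> R)
  (delta : R) K x : ntotal x != 0%N ->
  Cs G beta betai delta K.+1 x = 1 +
   \sum_(u : L) (up_rate G beta betai x u / out_rate G beta betai delta x
                   * Cs G beta betai delta K (incr x u)
               + down_rate delta x u / out_rate G beta betai delta x
                   * Cs G beta betai delta K (decr x u)).
Proof.
move=> h; rewrite /Cs big_ord_recl /= (negbTE h); congr (_ + _).
rewrite exchange_big /=; apply: eq_bigr => u _.
by rewrite big_split /= -!mulr_sumr.
Qed.

Lemma Pk_ge0 (R : realType) (L : finType) (G : rel L) (beta betai : nat -> R)
  (delta : R) :
  (forall n, 0 < beta n) -> (forall n, 0 < betai n) -> 0 < delta ->
  forall k x, 0 <= Pk G beta betai delta k x.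
Proof.
move=> hb hbi hd; elim=> [|k IH] x /=; case: ifP => // _.
have q0 : 0 <= out_rate G beta betai delta x.
  rewrite /out_rate sumr_ge0 // => u _.
  by rewrite addr_ge0 ?up_ge0 // /down_rate mulr_ge0 // ltW.
rewrite sumr_ge0 // => u _; rewrite addr_ge0 // mulr_ge0 // divr_ge0 //.
  exact: up_ge0.
by rewrite /down_rate mulr_ge0 // ltW.
Qed.

Lemma sum_p (R : realType) (L : finType) (G : rel L) (beta betai : nat -> R)
  (delta : R) x (A : R) :
  (forall n, 0 < beta n) -> (forall n, 0 < betai n) -> 0 < delta ->
  ntotal x != 0%N ->
  \sum_(u : L) (up_rate G beta betai x u / out_rate G beta betai delta x * A
               + down_rate delta x u / out_rate G beta betai delta x * A) = A.
Proof.
move=> hb hbi hd nn0; rewrite sum_split_rates -mulrDl -mulrDl -out_rateE.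
have hU0 : 0 <= \sum_(u : L) up_rate G beta betai x u.
  by apply: sumr_ge0 => u _; exact: up_ge0.
have hn : (1 <= (ntotal x)%:R :> R) by rewrite ler1n lt0n.
have hdn : 0 < delta * (ntotal x)%:R by rewrite mulr_gt0 // (lt_le_trans ltr01 hn).
rewrite divff ?mul1r // out_rateE gt_eqF //; lra.
Qed.

Lemma Pk_le1 (R : realType) (L : finType) (G : rel L) (beta betai : nat -> R)
  (delta : R) :
  (forall n, 0 < beta n) -> (forall n, 0 < betai n) -> 0 < delta ->
  forall k x, Pk G beta betai delta k x <= 1.
Proof.
move=> hb hbi hd; elim=> [|k IH] x /=; case: ifP => // nn0.
rewrite -[leRHS](@sum_p _ _ G beta betai delta x 1 hb hbi hd) ?nn0 //.
apply: ler_sum => u _; apply: lerD; apply: ler_wpM2l => //.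
- apply: divr_ge0; first exact: up_ge0.
  rewrite /out_rate sumr_ge0 // => v _.
  by rewrite addr_ge0 ?up_ge0 // /down_rate mulr_ge0 // ltW.
- apply: divr_ge0; first by rewrite /down_rate mulr_ge0 // ltW.
  rewrite /out_rate sumr_ge0 // => v _.
  by rewrite addr_ge0 ?up_ge0 // /down_rate mulr_ge0 // ltW.
Qed.

Lemma Pk_decr (R : realType) (L : finType) (G : rel L) (beta betai : nat -> R)
  (delta : R) :
  (forall n, 0 < beta n) -> (forall n, 0 < betai n) -> 0 < delta ->
  forall k x, Pk G beta betai delta k.+1 x <= Pk G beta betai delta k x.
Proof.
move=> hb hbi hd; elim=> [|k IH] x.
  have := @Pk_le1 _ _ G beta betai delta hb hbi hd 1 x; rewrite /=; by case: ifP.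
rewrite [leLHS]/= [leRHS]/=; case: ifP => // nn0.
have q0 : 0 <= out_rate G beta betai delta x.
  rewrite /out_rate sumr_ge0 // => v _.
  by rewrite addr_ge0 ?up_ge0 // /down_rate mulr_ge0 // ltW.
apply: ler_sum => u _; apply: lerD; apply: ler_wpM2l => //.
- by apply: divr_ge0 => //; exact: up_ge0.
- exact: IH.
- by apply: divr_ge0 => //; rewrite /down_rate mulr_ge0 // ltW.
- exact: IH.
Qed.

Lemma Pk_mono (R : realType) (L : finType) (G : rel L) (beta betai : nat -> R)
  (delta : R) :
  (forall n, 0 < beta n) -> (forall n, 0 < betai n) -> 0 < delta ->
  forall k K x, (k <= K)%N -> Pk G beta betai delta K x <= Pk G beta betai delta k x.
Proof.
move=> hb hbi hd k K x /subnKC <-; elim: (K - k)%N => [|j IH]; first by rewrite addn0.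
by rewrite addnS; apply: le_trans IH; apply: Pk_decr.
Qed.

Lemma Pk_Cs (R : realType) (L : finType) (G : rel L) (beta betai : nat -> R)
  (delta : R) :
  (forall n, 0 < beta n) -> (forall n, 0 < betai n) -> 0 < delta ->
  forall K x, K%:R * Pk G beta betai delta K x <= Cs G beta betai delta K x.
Proof.
move=> hb hbi hd K x; rewrite /Cs.
have -> : K%:R * Pk G beta betai delta K x = \sum_(k < K) Pk G beta betai delta K x.
  by rewrite sumr_const card_ord mulr_natl.
apply: ler_sum => k _; apply: Pk_mono => //; exact: ltnW.
Qed.

Lemma Cs_upper (R : realType) (L : finType) (G : rel L) (beta betai : nat -> R)
  (delta : R) (f : nat -> R) :
  (forall n, 0 < beta n) -> (forall n, 0 < betai n) -> 0 < delta ->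
  (forall n, 0 <= f n) -> (forall n, f n <= f n.+1) ->
  (forall n, (0 < n)%N -> (beta n * #|L|%:R + betai n + delta) * n%:R
        + (beta n * #|L|%:R + betai n) * n%:R * (f n.+1 - f n)
       <= delta * n%:R * (f n - f n.-1)) ->
  forall K x, Cs G beta betai delta K x <= f (ntotal x).
Proof.
move=> hb hbi hd hf0 hfm hst; elim=> [|K IH] x.
  by rewrite /Cs big_ord0.
have [n0|nn0] := eqVneq (ntotal x) 0%N; first by rewrite Cs0.
rewrite CsS //.
set q := out_rate G beta betai delta x.
set U := \sum_(u : L) up_rate G beta betai x u.
set n := ntotal x.
have hq : q = U + delta * n%:R by rewrite /q out_rateE.
have hU0 : 0 <= U by apply: sumr_ge0 => u _; exact: up_ge0.
have hU : U <= (beta n * #|L|%:R + betai n) * n%:R by exact: sumU_le.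
have hn : (1 <= n%:R :> R) by rewrite ler1n lt0n.
have hdn : 0 < delta * n%:R by rewrite mulr_gt0 // (lt_le_trans ltr01 hn).
have qpos : 0 < q by rewrite hq; lra.
apply: (@le_trans _ _ (1 + (U / q * f n.+1 + delta * n%:R / q * f n.-1))).
  rewrite lerD2l -sum_split_rates; apply: ler_sum => u _.
  apply: lerD.
    apply: ler_wpM2l; first by apply: divr_ge0 => //; [exact: up_ge0 | exact: ltW].
    by rewrite /n -(@ntotal_incr _ x u); apply: IH.
  have [xu0|xupos] := eqVneq (x u) 0%N.
    by rewrite /down_rate xu0 mulr0 !mul0r.
  apply: ler_wpM2l.
    apply: divr_ge0 => //; last exact: ltW.
    by rewrite /down_rate mulr_ge0 // ltW.
  by rewrite /n -(@ntotal_decr _ x u) ?lt0n //; apply: IH.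
have hs : _ := hst n ltac:(by rewrite lt0n).
have qn0 : q != 0 by rewrite gt_eqF.
have -> : 1 + (U / q * f n.+1 + delta * n%:R / q * f n.-1) =
   (q + U * f n.+1 + delta * n%:R * f n.-1) / q by field.
rewrite ler_pdivrMr // hq.
have h1 : 0 <= ((beta n * #|L|%:R + betai n) * n%:R - U) * (f n.+1 - f n).
  by apply: mulr_ge0; rewrite subr_ge0 //; exact: hfm.
have e1 : (beta n * #|L|%:R + betai n + delta) * n%:R =
   (beta n * #|L|%:R + betai n) * n%:R + delta * n%:R by ring.
rewrite e1 in hs.
set c := (beta n * #|L|%:R + betai n) * n%:R in hs h1 hU *.
set D := delta * n%:R in hs hdn *.
nra.
Qed.

Lemma Hs_lower2 (R : realType) (L : finType) (G : rel L) (beta betai : nat -> R)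
  (delta : R) (g : nat -> R) (Gm : R) :
  (forall n, 0 < beta n) -> (forall n, 0 < betai n) -> 0 < delta ->
  g 0%N = 0 -> (forall n, g n <= g n.+1) -> (forall n, g n <= Gm) ->
  (forall n, (0 < n)%N ->
      (g n - g n.-1) * ((beta n * #|L|%:R + betai n + delta) * n%:R) <= 1) ->
  forall K x, g (ntotal x) - Gm * Pk G beta betai delta K x
              <= Hs G beta betai delta K x.
Proof.
move=> hb hbi hd g0 hgm hgM hst.
have Gm0 : 0 <= Gm by rewrite -g0.
have gmono : forall a b, (a <= b)%N -> g a <= g b.
  move=> a b /subnKC <-; elim: (b - a)%N => [|j IH]; first by rewrite addn0.
  by rewrite addnS; apply: le_trans IH _.
elim=> [|K IH] x.
  rewrite /Hs big_ord0 /=; case: ifP => [/eqP ->|_]; first by rewrite g0 mulr0 subr0.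
  by rewrite mulr1 subr_le0.
have [n0|nn0] := eqVneq (ntotal x) 0%N.
  by rewrite Hs0 // Pk0 // n0 g0 mulr0 subr0.
rewrite HsS // [Pk _ _ _ _ _ _]/= (negbTE nn0).
set q := out_rate G beta betai delta x.
set U := \sum_(u : L) up_rate G beta betai x u.
set n := ntotal x.
have hq : q = U + delta * n%:R by rewrite /q out_rateE.
have hU0 : 0 <= U by apply: sumr_ge0 => u _; exact: up_ge0.
have hU : U <= (beta n * #|L|%:R + betai n) * n%:R by exact: sumU_le.
have hn : (1 <= n%:R :> R) by rewrite ler1n lt0n.
have hdn : 0 < delta * n%:R by rewrite mulr_gt0 // (lt_le_trans ltr01 hn).
have qpos : 0 < q by rewrite hq; lra.
set P := \sum_(u : L) _.
have hP : P = \sum_(u : L) (up_rate G beta betai x u / q * Pk G beta betai delta K (incr x u)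
        + down_rate delta x u / q * Pk G beta betai delta K (decr x u)) by [].
apply: (@le_trans _ _ (q^-1 + \sum_(u : L)
     (up_rate G beta betai x u / q * (g n.-1 - Gm * Pk G beta betai delta K (incr x u))
    + down_rate delta x u / q * (g n.-1 - Gm * Pk G beta betai delta K (decr x u))))).
  have -> : \sum_(u : L)
     (up_rate G beta betai x u / q * (g n.-1 - Gm * Pk G beta betai delta K (incr x u))
    + down_rate delta x u / q * (g n.-1 - Gm * Pk G beta betai delta K (decr x u)))
    = g n.-1 - Gm * P.
    rewrite (eq_bigr (fun u => (up_rate G beta betai x u / q * g n.-1
        + down_rate delta x u / q * g n.-1) -
       Gm * (up_rate G beta betai x u / q * Pk G beta betai delta K (incr x u)
        + down_rate delta x u / q * Pk G beta betai delta K (decr x u)))); last first.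
      by move=> u _; ring.
    by rewrite sumrB (@sum_p _ _ G beta betai delta x (g n.-1) hb hbi hd nn0) hP mulr_sumr.
  have hs : _ := hst n ltac:(by rewrite lt0n).
  suff : g n - g n.-1 <= q^-1 by lra.
  rewrite -[q^-1]mul1r ler_pdivlMr // hq.
  have hd0 : 0 <= g n - g n.-1.
    by rewrite subr_ge0; apply: gmono; exact: leq_pred.
  apply: le_trans hs; apply: ler_wpM2l => //.
  have e1 : (beta n * #|L|%:R + betai n + delta) * n%:R =
     (beta n * #|L|%:R + betai n) * n%:R + delta * n%:R by ring.
  by rewrite e1 lerD2r.
rewrite lerD2l; apply: ler_sum => u _.
apply: lerD.
  apply: ler_wpM2l; first by apply: divr_ge0 => //; [exact: up_ge0 | exact: ltW].
  apply: le_trans (IH _); rewrite (@ntotal_incr _ x u) lerD2r.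
  by apply: gmono; rewrite -/n; lia.
have [xu0|xupos] := eqVneq (x u) 0%N.
  by rewrite /down_rate xu0 mulr0 !mul0r.
apply: ler_wpM2l.
  apply: divr_ge0 => //; last exact: ltW.
  by rewrite /down_rate mulr_ge0 // ltW.
by apply: le_trans (IH _); rewrite (@ntotal_decr _ x u) ?lt0n.
Qed.

Lemma tail_zero (R : realType) (F : nat -> R) (M : nat) :
  (forall k, 0 <= F k) -> (forall k, (M <= k)%N -> F k = 0) ->
  forall n, \sum_(k < n) F k <= \sum_(k < M) F k.
Proof.
move=> F0 FM n; have [nM|Mn] := leqP n M; first exact: psum_mono.
rewrite -!(big_mkord xpredT) (big_cat_nat (leq0n M) (ltnW Mn)) /=.
rewrite [X in _ + X]big_nat_cond [X in _ + X]big1 ?addr0 //.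
by move=> k /andP[/andP[hk _] _]; exact: FM.
Qed.

Lemma psum_diff (R : realType) (d : nat -> R) n :
  \sum_(k < n.+1) d k.+1 - \sum_(k < n) d k.+1 = d n.+1.
Proof. by rewrite big_ord_recr /= addrC addrK. Qed.

Lemma psum_diff' (R : realType) (d : nat -> R) n : (0 < n)%N ->
  \sum_(k < n) d k.+1 - \sum_(k < n.-1) d k.+1 = d n.
Proof. by case: n => // n _; rewrite psum_diff. Qed.

Lemma expr_split (R : realType) (l : R) N n : (n < N)%N ->
  l ^+ (N - n) = l * l ^+ (N - n.+1).
Proof.
move=> h; have -> : (N - n = (N - n.+1).+1)%N by lia.
by rewrite exprS.
Qed.

Lemma c_bound (R : realType) (L : finType) (beta betai : nat -> R) :
  (exists M : R, forall n, beta n <= M) -> (exists M : R, forall n, betai n <= M) ->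
  exists B : R, forall n, beta n * #|L|%:R + betai n <= B.
Proof.
move=> [Mb hMb] [Mbi hMbi]; exists (Mb * #|L|%:R + Mbi) => n.
by rewrite lerD // ler_wpM2r.
Qed.

Lemma c_small (R : realType) (L : finType) (beta betai : nat -> R) (delta eps : R) :
  beta n @[n --> \oo] --> 0 -> betai n @[n --> \oo] --> 0 ->
  0 < delta -> 0 < eps ->
  exists N, (0 < N)%N /\ forall n, (N <= n)%N -> beta n * #|L|%:R + betai n <= eps * delta.
Proof.
move=> hb hbi hd he.
have e1 : 0 < eps * delta / 2 / (#|L|%:R + 1) by rewrite !divr_gt0 ?mulr_gt0 // ltr_wpDl.
have e2 : 0 < eps * delta / 2 by rewrite !divr_gt0 ?mulr_gt0.
move/cvgrPdist_le : hb => /(_ _ e1) [N1 _ hN1].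
move/cvgrPdist_le : hbi => /(_ _ e2) [N2 _ hN2].
exists (maxn 1 (maxn N1 N2)); split; first by rewrite leq_max.
move=> n hn.
have := hN1 n ltac:(rewrite /=; lia); have := hN2 n ltac:(rewrite /=; lia).
rewrite !sub0r !normrN => h2 h1.
have hb1 : beta n <= eps * delta / 2 / (#|L|%:R + 1) by apply: le_trans (ler_norm _) h1.
have hb2 : betai n <= eps * delta / 2 by apply: le_trans (ler_norm _) h2.
have hL : 0 <= (#|L|%:R : R) by [].
have : beta n * #|L|%:R <= eps * delta / 2 / (#|L|%:R + 1) * #|L|%:R.
  by rewrite ler_wpM2r.
have : eps * delta / 2 / (#|L|%:R + 1) * #|L|%:R <= eps * delta / 2.
  rewrite -mulrA ler_piMr ?divr_ge0 ?mulr_ge0 ?ltW //.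
  by rewrite mulrC ltr_pdivrMr ?ltr_wpDl // mul1r ltrDl ltr01.
lra.
Qed.

Lemma hit_upper (R : realType) (L : finType) (G : rel L) (beta betai : nat -> R)
  (delta eps B : R) (N : nat) :
  (forall n, 0 < beta n) -> (forall n, 0 < betai n) -> 0 < delta ->
  0 < eps -> eps <= 1/2 ->
  (forall n, beta n * #|L|%:R + betai n <= B) -> (0 < N)%N ->
  (forall n, (N <= n)%N -> beta n * #|L|%:R + betai n <= eps * delta) ->
  exists C0 : R, forall x, (0 < ntotal x)%N ->
   (exp_hit G beta betai delta x <=
      ((1 - eps)^-1 / delta * (1 + ln (ntotal x)%:R) + C0)%:E)%E.
Proof.
move=> hb hbi hd he he2 hB N0 hN.
set c := fun n => beta n * #|L|%:R + betai n.
have c0 : forall n, 0 < c n.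
  by move=> n; rewrite /c ltr_wpDl // mulr_ge0 // ltW.
have B0 : 0 < B by apply: lt_le_trans (c0 0%N) (hB 0%N).
set a := (1 - eps)^-1.
have a0 : 0 < a by rewrite invr_gt0; lra.
have ha : a * (1 - eps) = 1 by rewrite mulVf //; apply/eqP; lra.
set lam := (1 + B + B * a / delta) / delta + 1.
have k0 : 0 <= B * a / delta by rewrite divr_ge0 ?mulr_ge0 ?ltW.
have lam1 : 1 <= lam.
  rewrite /lam lerDr; apply: divr_ge0; [lra | exact: ltW].
have lamE : delta * lam = 1 + B + B * a / delta + delta.
  by rewrite /lam; field; apply/eqP; lra.
pose e := fun k => if (k < N)%N then lam ^+ (N - k) else 0.
have e0 : forall k, 0 <= e k.
  by move=> k; rewrite /e; case: ifP => // _; rewrite exprn_ge0 // (le_trans ler01).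
pose d := fun k : nat => a / (delta * k%:R) + e k.
have d0 : forall k, 0 <= d k.+1.
  by move=> k; rewrite /d addr_ge0 // divr_ge0 ?ltW // mulr_gt0.
pose f := fun n => \sum_(k < n) d k.+1.
exists (\sum_(k < N) e k.+1) => x hx.
have hf : forall K, Hs G beta betai delta K x <= f (ntotal x).
  move=> K; apply: (@Hs_upper _ _ G beta betai delta f) => //.
  - by move=> n; rewrite /f sumr_ge0.
  - by move=> n; rewrite /f big_ord_recr /= lerDl.
  move=> n n0; rewrite /f psum_diff psum_diff' //.
  have hn : (1 <= n%:R :> R) by rewrite ler1n.
  have dnE : delta * n%:R * d n = a + delta * n%:R * e n.
    rewrite /d; field; apply/andP; split; apply/eqP; lra.
  rewrite dnE -/(c n).
  have hfrac : n%:R / (n.+1)%:R <= 1 :> R.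
    by rewrite ler_pdivrMr ?ltr0Sn // mul1r ler_nat.
  have hfrac0 : 0 <= n%:R / (n.+1)%:R :> R by rewrite divr_ge0.
  have t1 : c n * n%:R * (a / (delta * (n.+1)%:R)) = (c n / delta) * (n%:R / (n.+1)%:R) * a.
    by field; rewrite (gt_eqF hd) andbT; apply/eqP; lra.
  have [nN|Nn] := leqP N n.
    have en : e n = 0 by rewrite /e ltnNge nN.
    have en1 : e n.+1 = 0 by rewrite /e ltnNge (leq_trans nN).
    rewrite /d en1 en mulr0 !addr0 t1.
    have hc : c n / delta <= eps by rewrite ler_pdivrMr //; exact: hN.
    have : c n / delta * (n%:R / (n.+1)%:R) * a <= eps * 1 * a.
      apply: ler_wpM2r; first exact: ltW.
      apply: ler_pM => //; apply: divr_ge0; [exact: ltW (c0 n) | exact: ltW].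
    have e2 : eps * 1 * a = a - 1 by rewrite -[in RHS]ha; ring.
    rewrite e2; set w := c n / delta * _ * a; lra.
  have en : e n = lam * lam ^+ (N - n.+1) by rewrite /e Nn expr_split.
  set mu := lam ^+ (N - n.+1).
  have mu1 : 1 <= mu by rewrite exprn_ege1.
  have en1 : e n.+1 <= mu.
    rewrite /e; case: ifP => _; first by [].
    exact: le_trans ler01 mu1.
  rewrite en /d mulrDr t1.
  set s := n%:R * mu.
  have s1 : 1 <= s by rewrite -[1]mulr1 ler_pM.
  have h1 : c n / delta * (n%:R / (n.+1)%:R) * a <= B * a / delta.
    have -> : B * a / delta = B / delta * 1 * a by ring.
    apply: ler_wpM2r; first exact: ltW.
    apply: ler_pM => //; first by rewrite divr_ge0 // ltW.
    by apply: ler_wpM2r; [rewrite invr_ge0 ltW | exact: hB].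
  have h2 : c n * n%:R * e n.+1 <= B * s.
    rewrite /s mulrA; apply: ler_pM.
    - by rewrite mulr_ge0 // ltW.
    - exact: e0.
    - by apply: ler_wpM2r; [exact: ler0n | exact: hB].
    - exact: en1.
  have h3 : delta * n%:R * (lam * mu) = s * (1 + B + B * a / delta + delta).
    by rewrite -lamE /s; ring.
  rewrite h3.
  have h4 : B * a / delta <= s * (B * a / delta) by rewrite ler_peMl.
  have h5 : 0 <= s * delta by rewrite mulr_ge0 //; [exact: le_trans ler01 s1 | exact: ltW].
  set k := B * a / delta in h1 h4 k0 *.
  set w1 := c n / delta * (n%:R / (n.+1)%:R) * a in h1 *.
  set w2 := c n * n%:R * e n.+1 in h2 *.
  nra.
apply: le_trans (@exp_hit_le _ _ G beta betai delta x (f (ntotal x)) hb hbi hd hf) _.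
rewrite lee_fin /f big_split /=.
have -> : \sum_(i < ntotal x) a / (delta * i.+1%:R) =
   a / delta * \sum_(i < ntotal x) (i.+1%:R)^-1.
  rewrite mulr_sumr; apply: eq_bigr => i _.
  by rewrite invfM mulrA.
apply: lerD.
  apply: ler_wpM2l; first by rewrite divr_ge0 ?ltW.
  exact: harm_upper.
apply: (@tail_zero _ (fun k => e k.+1)) => // k hk.
by rewrite /e ltnNge (leq_trans hk).
Qed.

Lemma cs_bound (R : realType) (L : finType) (G : rel L) (beta betai : nat -> R)
  (delta eps B : R) (N : nat) :
  (forall n, 0 < beta n) -> (forall n, 0 < betai n) -> 0 < delta ->
  0 < eps -> eps <= 1/2 ->
  (forall n, beta n * #|L|%:R + betai n <= B) -> (0 < N)%N ->
  (forall n, (N <= n)%N -> beta n * #|L|%:R + betai n <= eps * delta) ->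
  exists w : nat -> R, forall K x, Cs G beta betai delta K x <= w (ntotal x).
Proof.
move=> hb hbi hd he he2 hB N0 hN.
set c := fun n => beta n * #|L|%:R + betai n.
have c0 : forall n, 0 < c n.
  by move=> n; rewrite /c ltr_wpDl // mulr_ge0 // ltW.
have B0 : 0 < B by apply: lt_le_trans (c0 0%N) (hB 0%N).
set lam := 2 * B / delta + 1.
have lam1 : 1 <= lam by rewrite /lam lerDr divr_ge0 ?mulr_ge0 // ltW.
have lamE : delta * lam = 2 * B + delta by rewrite /lam; field; apply/eqP; lra.
pose dd := fun k => if (k < N)%N then 3 * lam ^+ (N - k) else 3.
have dd0 : forall k, 0 <= dd k.
  move=> k; rewrite /dd; case: ifP => // _.
  by rewrite mulr_ge0 // exprn_ge0 // (le_trans ler01).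
pose f := fun n => \sum_(k < n) dd k.+1.
exists f => K x.
apply: (@Cs_upper _ _ G beta betai delta f) => //.
- by move=> n; rewrite /f sumr_ge0.
- by move=> n; rewrite /f big_ord_recr /= lerDl.
move=> n n0; rewrite /f psum_diff psum_diff' // -/(c n).
have hn : (1 <= n%:R :> R) by rewrite ler1n.
have [nN|Nn] := leqP N n.
  have en : dd n = 3 by rewrite /dd ltnNge nN.
  have en1 : dd n.+1 = 3 by rewrite /dd ltnNge (leq_trans nN).
  rewrite en en1.
  have hc : c n * n%:R <= eps * delta * n%:R by rewrite ler_wpM2r // hN.
  have hc2 : eps * delta * n%:R <= 1/2 * (delta * n%:R).
    by rewrite mulrA ler_wpM2r // ler_wpM2r // ltW.
  have -> : (c n + delta) * n%:R + c n * n%:R * 3 = 4 * (c n * n%:R) + delta * n%:R by ring.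
  have -> : delta * n%:R * 3 = 3 * (delta * n%:R) by ring.
  set X := c n * n%:R in hc hc2 *; set Y := delta * n%:R in hc2 *.
  set Z := eps * delta * n%:R in hc hc2.
  lra.
have en : dd n = 3 * (lam * lam ^+ (N - n.+1)) by rewrite /dd Nn expr_split.
set mu := lam ^+ (N - n.+1).
have mu1 : 1 <= mu by rewrite exprn_ege1.
have en1 : dd n.+1 <= 3 * mu.
  rewrite /dd; case: ifP => _; first by [].
  by rewrite -[X in X <= _]mulr1 ler_pM2l.
rewrite en.
set s := n%:R * mu.
have sn : n%:R <= s by rewrite /s -[X in X <= _]mulr1 ler_pM2l // (lt_le_trans ltr01 hn).
have h1 : (c n + delta) * n%:R <= (B + delta) * s.
  apply: ler_pM.
  - by rewrite addr_ge0 // ltW.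
  - by [].
  - by rewrite lerD2r; exact: hB.
  - exact: sn.
have h2 : c n * n%:R * dd n.+1 <= B * (3 * s).
  have -> : B * (3 * s) = (B * n%:R) * (3 * mu) by rewrite /s; ring.
  apply: ler_pM.
  - by rewrite mulr_ge0 // ltW.
  - exact: dd0.
  - by apply: ler_wpM2r => //; exact: hB.
  - exact: en1.
have h3 : delta * n%:R * (3 * (lam * mu)) = 3 * s * (2 * B + delta).
  by rewrite -lamE /s; ring.
rewrite h3.
have s0 : 0 <= s by apply: le_trans sn; exact: ler0n.
have h4 : 0 <= B * s by rewrite mulr_ge0 // ltW.
have h5 : 0 <= delta * s by rewrite mulr_ge0 // ltW.
have e1 : (B + delta) * s = B * s + delta * s by ring.
have e2 : B * (3 * s) = 3 * (B * s) by ring.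
have e3 : 3 * s * (2 * B + delta) = 6 * (B * s) + 3 * (delta * s) by ring.
rewrite e3; rewrite e1 in h1; rewrite e2 in h2.
set X1 := (c n + delta) * n%:R in h1 *.
set X2 := c n * n%:R * dd n.+1 in h2 *.
set Y1 := B * s in h1 h2 h4 *. set Y2 := delta * s in h1 h5 *.
lra.
Qed.

Lemma hit_lower (R : realType) (L : finType) (G : rel L) (beta betai : nat -> R)
  (delta eps : R) (N : nat) (w : nat -> R) :
  (forall n, 0 < beta n) -> (forall n, 0 < betai n) -> 0 < delta ->
  0 < eps -> (0 < N)%N ->
  (forall n, (N <= n)%N -> beta n * #|L|%:R + betai n <= eps * delta) ->
  (forall K x, Cs G beta betai delta K x <= w (ntotal x)) ->
  forall x, (N <= ntotal x)%N ->
  (((ln (ntotal x).+1%:R - ln N%:R) / ((1 + eps) * delta))%:E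
     <= exp_hit G beta betai delta x)%E.
Proof.
move=> hb hbi hd he N0 hN hw x hx.
set M := ntotal x.
set c := fun n => beta n * #|L|%:R + betai n.
have ed0 : 0 < (1 + eps) * delta by rewrite mulr_gt0 //; lra.
pose m := fun j : nat => if (N <= j)%N && (j <= M)%N then ((1 + eps) * delta * j%:R)^-1 else 0.
have m0 : forall j, 0 <= m j.
  move=> j; rewrite /m; case: ifP => // _; rewrite invr_ge0 mulr_ge0 // ltW //.
pose g := fun n => \sum_(k < n) m k.+1.
set Gm := g M.
have hl : forall K, g M - Gm * Pk G beta betai delta K x <= Hs G beta betai delta K x.
  move=> K; apply: (@Hs_lower2 _ _ G beta betai delta g Gm) => //.
  - by rewrite /g big_ord0.
  - by move=> n; rewrite /g big_ord_recr /= lerDl.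
  - by move=> n; apply: (@tail_zero _ (fun k => m k.+1)) => // k hk; rewrite /m ltnNge hk andbF.
  move=> n n0; rewrite /g psum_diff' // /m.
  case: ifP; last by rewrite mul0r ler01.
  move=> /andP[hNn _].
  have hn : 0 < (n%:R : R) by rewrite ltr0n.
  rewrite mulrC ler_pdivrMr; last exact: mulr_gt0.
  have := hN n hNn; rewrite -/(c n) /c => hc.
  have : (beta n * #|L|%:R + betai n) * n%:R <= eps * delta * n%:R.
    by rewrite ler_wpM2r.
  set X := (beta n * #|L|%:R + betai n) in hc *.
  have -> : (X + delta) * n%:R = X * n%:R + delta * n%:R by ring.
  have -> : 1 * ((1 + eps) * delta * n%:R) = eps * delta * n%:R + delta * n%:R by ring.
  lra.
have gM : (ln M.+1%:R - ln N%:R) / ((1 + eps) * delta) <= g M.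
  rewrite /g.
  have -> : \sum_(k < M) m k.+1 = ((1 + eps) * delta)^-1 *
      \sum_(k < M) (if (N <= k.+1)%N then (k.+1%:R)^-1 else 0).
    rewrite mulr_sumr; apply: eq_bigr => k _; rewrite /m ltn_ord andbT.
    case: ifP => _; last by rewrite mulr0.
    by rewrite invfM.
  rewrite mulrC; apply: ler_wpM2l; first by rewrite invr_ge0 ltW.
  by apply: harm_lower => //; rewrite -/M; lia.
have Gm0 : 0 <= Gm by rewrite /Gm /g sumr_ge0.
have w0 : 0 <= w M by rewrite /M; apply: le_trans (hw 0%N x); rewrite /Cs big_ord0.
have claim : forall eta, 0 < eta -> ((g M - eta)%:E <= exp_hit G beta betai delta x)%E.
  move=> eta heta.
  set KK := (Num.trunc (Gm * w M / eta)).+1.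
  have hK : Gm * w M / eta < KK%:R by exact: truncnS_gt.
  have K0 : (0 : R) < KK%:R by rewrite ltr0n.
  have hP := @Pk_Cs _ _ G beta betai delta hb hbi hd KK x.
  have hP2 : KK%:R * Pk G beta betai delta KK x <= w M by apply: le_trans hP (hw KK x).
  have hP0 : 0 <= Pk G beta betai delta KK x by exact: Pk_ge0.
  have h1 : Gm * Pk G beta betai delta KK x <= eta.
    have h2 : Gm * (KK%:R * Pk G beta betai delta KK x) <= Gm * w M by rewrite ler_wpM2l.
    have h3 : Gm * w M < eta * KK%:R by rewrite -ltr_pdivrMl // mulrC.
    have h4 : Gm * Pk G beta betai delta KK x * KK%:R <= eta * KK%:R.
      by apply: le_trans (ltW h3); rewrite -mulrA [_ * KK%:R]mulrC.
    by rewrite -(ler_pM2r K0).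
  apply: le_trans (@exp_hit_ge _ _ G beta betai delta x KK hb hbi hd).
  rewrite lee_fin; apply: le_trans (hl KK); lra.
apply: (@le_trans _ _ (g M)%:E); first by rewrite lee_fin.
case E: (exp_hit G beta betai delta x) => [r| |] //.
- rewrite lee_fin; apply/ler_addgt0Pr => eta heta.
  by have := claim eta heta; rewrite E lee_fin; lra.
- by rewrite leey.
- by have := claim 1 ltr01; rewrite E.
Qed.

Unset Implicit Arguments.

Theorem corollary3 (R : realType) (L : finType) (G : rel L)
  (G_sym : symmetric G) (G_irr : irreflexive G)
  (G_conn : forall u v : L, connect G u v)
  (beta betai : nat -> R)
  (beta_pos : forall n, 0 < beta n) (betai_pos : forall n, 0 < betai n)
  (beta_bnd : exists M : R, forall n, beta n <= M)
  (betai_bnd : exists M : R, forall n, betai n <= M)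
  (beta_lim : beta n @[n --> \oo] --> 0)
  (betai_lim : betai n @[n --> \oo] --> 0)
  (delta : R) (delta_pos : 0 < delta)
  (X : nat -> state L)
  (hX : forall n, (0 < n)%N -> ntotal (X n) = n) :
  ((delta%:E * exp_hit G beta betai delta (X n) * ((ln n%:R)^-1)%:E)%E
     @[n --> \oo] --> 1%:E).
Proof.
have [B hB] := @c_bound R L beta betai beta_bnd betai_bnd.
have half0 : (0 : R) < 1/2 by [].
have [N1 [N10 hN1]] := @c_small R L beta betai delta (1/2) beta_lim betai_lim delta_pos half0.
have [C1 hC1] := @hit_upper R L G beta betai delta (1/2) B N1 beta_pos betai_pos delta_pos
   half0 (lexx _) hB N10 hN1.
have fin : forall x, exp_hit G beta betai delta x \is a fin_num.
  move=> x.
  have h0 : (0 <= exp_hit G beta betai delta x)%E.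
    apply: le_trans (@exp_hit_ge _ _ G beta betai delta x 0 beta_pos betai_pos delta_pos).
    by rewrite /Hs big_ord0.
  rewrite ge0_fin_numE //.
  have [n0|npos] := eqVneq (ntotal x) 0%N.
    have : (exp_hit G beta betai delta x <= 0%:E)%E.
      by apply: (@exp_hit_le _ _ G beta betai delta x 0) => // K; rewrite Hs0.
    by move=> h; apply: le_lt_trans h _; rewrite ltry.
  by apply: le_lt_trans (hC1 x _) _; rewrite ?ltry ?lt0n.
set y := fun n : nat => delta * fine (exp_hit G beta betai delta (X n)) * (ln n%:R)^-1.
have -> : (fun n : nat => (delta%:E * exp_hit G beta betai delta (X n) * ((ln n%:R)^-1)%:E)%E)
   = (fun n => (y n)%:E).
  by apply: funext => n; rewrite -[exp_hit _ _ _ _ (X n)](fineK (fin _)).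
apply: cvg_EFin; first exact: nearW.
have -> : (fine \o (fun n : nat => (y n)%:E)) = y by [].
apply/cvgrPdist_le => e he.
set eps := Num.min (e / 4) (1 / 2).
have eps0 : 0 < eps by rewrite lt_min divr_gt0.
have eps2 : eps <= 1 / 2 by rewrite ge_min lexx orbT.
have epse : eps <= e / 4 by rewrite ge_min lexx.
have [N [N0 hN]] := @c_small R L beta betai delta eps beta_lim betai_lim delta_pos eps0.
have [C0 hC0] := @hit_upper R L G beta betai delta eps B N beta_pos betai_pos delta_pos
   eps0 eps2 hB N0 hN.
have [w hw] := @cs_bound R L G beta betai delta eps B N beta_pos betai_pos delta_pos
   eps0 eps2 hB N0 hN.
have hlow := @hit_lower R L G beta betai delta eps N w beta_pos betai_pos delta_pos
   eps0 N0 hN hw.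
set a := (1 - eps)^-1.
have a0 : 0 < a by rewrite invr_gt0; lra.
have ha : a * (1 - eps) = 1 by rewrite mulVf //; apply/eqP; lra.
set Lam := Num.max (Num.max ((a + delta * C0) / eps) (ln N%:R / eps)) 1.
near=> n.
have hnN : (N <= n)%N by near: n; exact: nbhs_infty_ge.
have hnL : expR Lam <= n%:R by near: n; exact: nbhs_infty_ger.
have n0 : (0 < n)%N by apply: leq_trans hnN.
have hXn := hX n n0.
have npos : (0 : R) < n%:R by rewrite ltr0n.
pose l := ln (n%:R : R).
have hl : Lam <= l.
  by rewrite /l -ler_expR lnK // posrE.
have hl1 : 1 <= l by apply: le_trans hl; rewrite le_max lexx orbT.
have hlA : (a + delta * C0) / eps <= l.
  by apply: le_trans hl; rewrite le_max le_max lexx.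
have hlN : ln N%:R / eps <= l.
  by apply: le_trans hl; rewrite le_max le_max lexx orbT.
pose r := fine (exp_hit G beta betai delta (X n)).
have hr : exp_hit G beta betai delta (X n) = r%:E by rewrite /r fineK.
have up := hC0 (X n) ltac:(by rewrite hXn).
have lo := hlow (X n) ltac:(by rewrite hXn).
rewrite hr hXn lee_fin in up; rewrite hr hXn lee_fin in lo.
have yE : y n = delta * r / l by [].
rewrite yE.
have l0 : 0 < l by apply: lt_le_trans hl1.
pose D := delta * r.
have a2 : a <= 2.
  have : a * (1/2) <= a * (1 - eps) by apply: ler_wpM2l; [exact: ltW | lra].
  rewrite ha; lra.
have aeps : a = 1 + eps * a.
  have : a - eps * a = 1 by rewrite -ha; ring.
  lra.
have epsa : eps * a <= eps * 2 by rewrite ler_wpM2l // ltW.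
have u1 : D <= a * l + (a + delta * C0).
  have := ler_wpM2l (ltW delta_pos) up.
  have -> : delta * ((1 - eps)^-1 / delta * (1 + ln n%:R) + C0) = a * l + (a + delta * C0).
    by rewrite /a /l; field; rewrite (gt_eqF delta_pos) andbT; apply/eqP; lra.
  by [].
have u2 : a + delta * C0 <= eps * l.
  by have := hlA; rewrite ler_pdivrMr // [eps * l]mulrC.
have u3 : a * l <= (1 + 2 * eps) * l by apply: ler_wpM2r; [exact: ltW | lra].
have u4 : eps * l <= e / 4 * l by rewrite ler_wpM2r // ltW.
have hup : D <= (1 + e) * l.
  have -> : (1 + e) * l = l + 4 * (e / 4 * l) by field.
  have e3 : (1 + 2 * eps) * l = l + 2 * (eps * l) by ring.
  rewrite e3 in u3.
  set A1 := a * l in u1 u3; set A2 := eps * l in u2 u3 u4; set A3 := e / 4 * l in u4 *.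
  set A4 := a + delta * C0 in u1 u2.
  have A30 : 0 <= A3 by rewrite /A3 mulr_ge0 // ltW // divr_gt0.
  lra.
have lo1 : ln n.+1%:R - ln N%:R <= (1 + eps) * D.
  rewrite ler_pdivrMr ?mulr_gt0 // in lo; last lra.
  by have -> : (1 + eps) * D = r * ((1 + eps) * delta) by rewrite /D; ring.
have lo2 : l <= ln n.+1%:R by rewrite /l ler_ln ?posrE ?ltr0n // ler_nat.
have lo3 : ln N%:R <= eps * l by have := hlN; rewrite ler_pdivrMr // [eps * l]mulrC.
have hlo : (1 - e) * l <= D.
  have h1 : (1 - eps) * l <= (1 + eps) * D.
    have -> : (1 - eps) * l = l - eps * l by ring.
    set A := eps * l in lo3 *; set A' := (1 + eps) * D in lo1 *.
    set l1 := ln n.+1%:R in lo1 lo2; set l2 := ln N%:R in lo1 lo3.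
    lra.
  have h2 : (1 - 2 * eps) * l * (1 + eps) <= D * (1 + eps).
    apply: le_trans (_ : (1 - eps) * l <= _); last by rewrite [D * _]mulrC.
    have -> : (1 - 2 * eps) * l * (1 + eps) = (1 - eps) * l - 2 * (eps * (eps * l)) by ring.
    have : 0 <= eps * (eps * l) by apply: mulr_ge0; [exact: ltW | apply: mulr_ge0; exact: ltW].
    lra.
  rewrite ler_pM2r in h2; last lra.
  apply: le_trans h2; apply: ler_wpM2r; [exact: ltW | lra].
have q1 : D / l <= 1 + e by rewrite ler_pdivrMr.
have q2 : 1 - e <= D / l by rewrite ler_pdivlMr.
rewrite /D in q1 q2; rewrite ler_norml; set z := delta * r / l in q1 q2 *.
apply/andP; split; lra.
Unshelve. all: by end_near.
Qed.
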